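(* Let $r=r(n)\ge3$ and $m=m(n)$ be integers with $r^{-2}n\le m=o(r^{-3}n^{3/2})$, and let $M_0^*=\bigl\lceil\log(r^{-2}n)+\frac{3^4r^2m}{n}\bigr\rceil$. Then, as $n\to\infty$, the number of hypergraphs in $\mathcal{L}_r(n,m)$ in which every vertex has degree at most $M_0^*$ equals $\bigl(1-O(r^6/n^3)\bigr)|\mathcal{L}_r(n,m)|$.
   Context: An $r$-graph on $[n]$ is a set of $r$-subsets of $[n]$ (edges); it is linear if any two distinct edges share at most one vertex. $\mathcal{L}_r(n,m)$ is the set of linear $r$-graphs on $[n]$ with exactly $m$ edges. The degree of a vertex is the number of edges containing it. $\log$ is the natural logarithm. *)

(* Defs.v *)
From mathcomp Require Import all_boot.
From Stdlib Require Import Reals ZArith.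

Set Implicit Arguments.
Unset Strict Implicit.
Unset Printing Implicit Defensive.

Definition is_rgraph (n r : nat) (H : {set {set 'I_n}}) : bool :=
  [forall e in H, #|e| == r].

Definition is_linear (n : nat) (H : {set {set 'I_n}}) : bool :=
  [forall e in H, forall f in H, (e != f) ==> (#|e :&: f| <= 1)].

Definition Lr (n r m : nat) : {set {set {set 'I_n}}} :=
  [set H : {set {set 'I_n}} | [&& is_rgraph r H, is_linear H & #|H| == m]].

Definition deg (n : nat) (H : {set {set 'I_n}}) (v : 'I_n) : nat :=
  #|[set e in H | v \in e]|.

(* ceiling of a real number: up y - 1 = floor y, ceil x = - floor (- x) *)
Definition Rceil (x : R) : Z := (- (up (- x) - 1))%Z.

Definition M0star (n r m : nat) : Z :=
  Rceil (ln (INR n / (INR r ^ 2)) + 3 ^ 4 * (INR r ^ 2) * INR m / INR n)%R.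

Definition Lr_good (n r m : nat) : {set {set {set 'I_n}}} :=
  [set H in Lr n r m | [forall v : 'I_n, (Z.of_nat (deg H v) <=? M0star n r m)%Z]].

(* Main.v *)
Require Import Defs.
From mathcomp Require Import all_boot.
From Stdlib Require Import Reals ZArith Lra Lia Factorial Rpower.
Set Implicit Arguments. Unset Strict Implicit. Unset Printing Implicit Defensive.

Lemma card_bigcup_leq (I T : finType) (P : pred I) (F : I -> {set T}) :
  #|\bigcup_(i | P i) F i| <= \sum_(i | P i) #|F i|.
Proof.
elim/big_rec2: _ => [|i A s Pi IH]; first by rewrite cards0.
apply: leq_trans (leq_card_setU _ _) _; exact: leq_add.
Qed.

Lemma card_pairs (A B : finType) (F : {set A * B}) :
  #|F| = \sum_a #|[set b | (a, b) \in F]|.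
Proof.
pose G := fun (a : A) (b : B) => if (a,b) \in F then 1 else 0.
rewrite -sum1_card big_mkcond /=.
have -> : \sum_(a : A) #|[set b | (a, b) \in F]| = \sum_a \sum_b G a b.
  apply: eq_bigr => a _; rewrite -sum1_card big_mkcond /=.
  by apply: eq_bigr => b _; rewrite inE.
rewrite (pair_bigA _ G).
by apply: eq_bigr => -[a b] _.
Qed.

Lemma setDUK' (T : finType) (A B : {set T}) : B \subset A -> (A :\: B) :|: B = A.
Proof.
move=> /subsetP sub; apply/setP => x; rewrite !inE.
by case xB: (x \in B); rewrite ?andbT ?orbT ?orbF //; rewrite sub.
Qed.

Section Sw.
Variables (n r m : nat) (v : 'I_n).
Hypothesis r2 : 1 < r.

Definition Lset := Lr n r m.
Definition Bj (j : nat) := [set H in Lset | j <= deg H v].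
Definition Nout := #|[set f : {set 'I_n} | (#|f| == r) && (v \notin f)]|.
Definition Nin := #|[set f : {set 'I_n} | (#|f| == r) && (v \in f)]|.
Definition valid (H : {set {set 'I_n}}) (e : {set 'I_n}) :=
  [set f : {set 'I_n} | [&& #|f| == r, v \notin f & [forall g in H :\ e, #|f :&: g| <= 1]]].

Lemma inL (H : {set {set 'I_n}}) : H \in Lset -> [/\ forall e : {set 'I_n}, e \in H -> #|e| = r,
  forall e f : {set 'I_n}, e \in H -> f \in H -> e != f -> #|e :&: f| <= 1 & #|H| = m].
Proof.
rewrite inE => /and3P [/forallP hr /forallP hl /eqP hm]; split => //.
- by move=> e eH; have := hr e; rewrite eH => /eqP.
- move=> e f eH fH nef; have := hl e; rewrite eH => /forallP /(_ f).
  by rewrite fH nef.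
Qed.

Lemma mkL (H : {set {set 'I_n}}) : (forall e : {set 'I_n}, e \in H -> #|e| = r) ->
  (forall e f : {set 'I_n}, e \in H -> f \in H -> e != f -> #|e :&: f| <= 1) -> #|H| = m -> H \in Lset.
Proof.
move=> h1 h2 h3; rewrite inE; apply/and3P; split.
- by apply/forallP => e; apply/implyP => eH; rewrite h1.
- apply/forallP => e; apply/implyP => eH; apply/forallP => f; apply/implyP => fH.
  by apply/implyP => nef; apply: h2.
- by rewrite h3.
Qed.


Lemma valid_notin H e f : f \in valid H e -> f \notin H :\ e.
Proof.
rewrite inE => /and3P [/eqP fr _ /forallP hf]; apply/negP => fH.
by have := hf f; rewrite fH setIid fr /= leqNgt r2.
Qed.

Lemma switch_step j H e f : H \in Bj j -> e \in H -> v \in e -> f \in valid H e ->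
  ((H :\ e) :|: [set f]) \in Bj j.-1.
Proof.
rewrite inE => /andP [HL dj] eH ve fV.
have fn := valid_notin fV.
move: fV; rewrite inE => /and3P [/eqP fr vf /forallP hf].
have [hr hl hm] := inL HL.
rewrite inE; apply/andP; split.
  apply: mkL.
  - move=> g; rewrite inE in_set1 => /orP [/setD1P [_ gH]|/eqP ->]; [exact: hr| exact: fr].
  - move=> g1 g2; rewrite in_setU in_set1 in_setU in_set1.
    case/orP => [g1H|/eqP ->]; case/orP => [g2H|/eqP ->].
    + by move: g1H g2H => /setD1P [_ g1H] /setD1P [_ g2H]; exact: hl.
    + by move=> _; rewrite setIC; have := hf g1; rewrite g1H.
    + by move=> _; have := hf g2; rewrite g2H.
    + by rewrite eqxx.
  - by rewrite setUC cardsU1 fn -hm (cardsD1 e H) eH add1n.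
rewrite -subn1 leq_subLR; apply: leq_trans dj _.
rewrite /deg.
have sub : [set g in H | v \in g] \subset e |: [set g in (H :\ e) :|: [set f] | v \in g].
  apply/subsetP => g; rewrite !inE => /andP [gH vg].
  by case: (g =P e) => //= ne; rewrite vg gH andbT; apply/orP; left; apply/eqP.
apply: leq_trans (subset_leq_card sub) _.
by rewrite cardsU1 leq_add2r leq_b1.
Qed.


Lemma sum_sub_leq (I : finType) (A : pred I) (f : I -> nat) :
  \sum_(i in A) f i <= \sum_i f i.
Proof. rewrite big_mkcond /=; apply: leq_sum => i _; by case: (i \in A). Qed.

Lemma switch j G : 0 < j ->
  (forall H e, H \in Lset -> e \in H -> G <= #|valid H e|) ->
  #|Bj j| * j * G <= #|Bj j.-1| * m * Nin.
Proof.
move=> j0 hG.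
pose F := [set x : {set {set 'I_n}} * {set 'I_n} * {set 'I_n} |
  [&& x.1.1 \in Bj j, x.1.2 \in x.1.1, v \in x.1.2 & x.2 \in valid x.1.1 x.1.2]].
pose Tg := [set y : {set {set 'I_n}} * {set 'I_n} * {set 'I_n} |
  [&& y.1.1 \in Bj j.-1, y.1.2 \in y.1.1, #|y.2| == r & v \in y.2]].
pose phi (x : {set {set 'I_n}} * {set 'I_n} * {set 'I_n}) :=
  ((x.1.1 :\ x.1.2) :|: [set x.2], x.2, x.1.2).
have phiK : {in F, cancel phi phi}.
  move=> [[H e] f]; rewrite inE /= => /and4P [_ eH _ fV].
  have fn := valid_notin fV.
  by rewrite /phi /= [_ :|: [set f]]setUC setU1K // [_ :|: [set e]]setUC setD1K.
have inj : {in F &, injective phi}.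
  by move=> x1 x2 h1 h2 e12; rewrite -(phiK x1 h1) -(phiK x2 h2) e12.
have sub : phi @: F \subset Tg.
  apply/subsetP => y /imsetP [[[H e] f] xF ->].
  move: (xF); rewrite inE /= => /and4P [HB eH ve fV].
  rewrite inE /=; apply/and4P; split.
  - exact: switch_step HB eH ve fV.
  - by rewrite !inE eqxx orbT.
  - move: HB; rewrite inE => /andP [HL _]; have [hr _ _] := inL HL; by rewrite hr.
  - done.
have le1 : #|F| <= #|Tg| by rewrite -(card_in_imset inj); exact: subset_leq_card.
have low : #|Bj j| * j * G <= #|F|.
  rewrite card_pairs.
  pose K := fun H e => #|[set b | ((H, e), b) \in F]|.
  have -> : \sum_(a : {set {set 'I_n}} * {set 'I_n}) #|[set b | (a, b) \in F]| =
     \sum_H \sum_e K H e.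
    by rewrite (pair_bigA _ K); apply: eq_bigr => -[H e].
  rewrite /K -mulnA -sum_nat_const.
  apply: leq_trans (sum_sub_leq (mem (Bj j)) _).
  apply: leq_sum => H HB.
  apply: (@leq_trans (\sum_(e in [set g in H | v \in g]) G)).
    rewrite sum_nat_const leq_mul2r; apply/orP; right.
    by move: HB; rewrite inE => /andP [].
  apply: leq_trans (sum_sub_leq (mem [set g in H | v \in g]) _).
  apply: leq_sum => e; rewrite inE => /andP [eH ve].
  have HL : H \in Lset by move: HB; rewrite inE => /andP [].
  apply: leq_trans (hG H e HL eH) _.
  apply: subset_leq_card; apply/subsetP => f fV.
  by rewrite inE [_ \in F]inE /= HB eH ve fV.
have up : #|Tg| = #|Bj j.-1| * m * Nin.
  rewrite card_pairs.
  pose K := fun H e => #|[set b | ((H, e), b) \in Tg]|.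
  have -> : \sum_(a : {set {set 'I_n}} * {set 'I_n}) #|[set b | (a, b) \in Tg]| =
     \sum_H \sum_e K H e.
    by rewrite (pair_bigA _ K); apply: eq_bigr => -[H e].
  rewrite /K -mulnA -sum_nat_const [RHS]big_mkcond /=.
  apply: eq_bigr => H _.
  case: ifP => HB.
    have HL : H \in Lset by move: HB; rewrite inE => /andP [].
    have [_ _ hm] := inL HL.
    rewrite -hm -sum_nat_const [RHS]big_mkcond /=; apply: eq_bigr => e _.
    case: ifP => eH.
      by rewrite /Nin; apply: eq_card => f; rewrite inE [_ \in Tg]inE /= HB eH !inE.
    by apply: eq_card0 => f; rewrite inE [_ \in Tg]inE /= HB eH.
  rewrite big1 // => e _; apply: eq_card0 => f; by rewrite inE [_ \in Tg]inE /= HB.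
by rewrite -up; apply: leq_trans low le1.
Qed.


Lemma Nout_eq : Nout = 'C(n.-1, r).
Proof.
have -> : n.-1 = #|[set~ v]| by rewrite cardsC1 card_ord.
rewrite -cards_draws /Nout.
apply: eq_card => f; rewrite !inE andbC; congr (_ && _).
apply/negP/subsetP => [vf x xf|sub vf]; first by rewrite !inE; apply/eqP => xv; apply: vf; rewrite -xv.
by have := sub v vf; rewrite !inE eqxx.
Qed.

Lemma Nout_in : Nout + Nin = 'C(n, r).
Proof.
have -> : n = #|{: 'I_n}| by rewrite card_ord.
rewrite -card_draws /Nout /Nin.
rewrite -(cardsID [set f : {set 'I_n} | v \in f] [set A : {set 'I_n} | #|A| == r]) addnC.
congr (_ + _); apply: eq_card => f; rewrite !inE //.
by rewrite andbC.
Qed.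

Definition bad (g : {set 'I_n}) := [set f : {set 'I_n} | (#|f| == r) && (1 < #|f :&: g|)].

Lemma card_contain (P : {set 'I_n}) : #|P| = 2 ->
  #|[set f : {set 'I_n} | (#|f| == r) && (P \subset f)]| <= 'C(n - 2, r - 2).
Proof.
move=> P2.
have -> : n - 2 = #|~: P| by rewrite cardsCs setCK card_ord P2.
rewrite -cards_draws.
rewrite -(@card_in_imset _ _ (fun f => f :\: P)).
  apply: subset_leq_card; apply/subsetP => A /imsetP [f]; rewrite inE => /andP [/eqP fr Pf] ->.
  rewrite inE; apply/andP; split.
    by apply/subsetP => x; rewrite !inE => /andP [].
  by rewrite cardsD fr (setIidPr Pf) P2.
move=> f1 f2; rewrite !inE => /andP [_ P1] /andP [_ P2'] e12.
by rewrite -(setDUK' P1) -(setDUK' P2') e12.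
Qed.

Lemma card_bad (g : {set 'I_n}) : #|g| = r -> #|bad g| <= 'C(r, 2) * 'C(n - 2, r - 2).
Proof.
move=> gr.
have sub : bad g \subset \bigcup_(P in [set P : {set 'I_n} | P \subset g & #|P| == 2])
   [set f : {set 'I_n} | (#|f| == r) && (P \subset f)].
  apply/subsetP => f; rewrite inE => /andP [fr /card_gt1P [x [y [xf yf xy]]]].
  apply/bigcupP; exists [set x; y].
    move: xf yf; rewrite !inE => /andP [xf xg] /andP [yf yg].
    by rewrite cards2 xy subUset !sub1set xg yg.
  move: xf yf; rewrite !inE => /andP [xf xg] /andP [yf yg].
  by rewrite fr subUset !sub1set xf yf.
apply: leq_trans (subset_leq_card sub) _.
apply: leq_trans (card_bigcup_leq _ _) _.
have -> : 'C(r, 2) = #|[set P : {set 'I_n} | P \subset g & #|P| == 2]| by rewrite cards_draws gr.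
rewrite -sum_nat_const.
apply: leq_sum => P; rewrite inE => /andP [_ /eqP P2].
exact: card_contain.
Qed.

Lemma valid_lb (H : {set {set 'I_n}}) (e : {set 'I_n}) : H \in Lset -> Nout - m * ('C(r, 2) * 'C(n - 2, r - 2)) <= #|valid H e|.
Proof.
move=> HL; have [hr _ hm] := inL HL.
pose A0 := [set f : {set 'I_n} | (#|f| == r) && (v \notin f)].
pose U := \bigcup_(g in H) bad g.
have sub : A0 :\: U \subset valid H e.
  apply/subsetP => f; rewrite !inE => /andP [nU /andP [fr vf]].
  rewrite fr vf /=; apply/forallP => g; apply/implyP => /setD1P [_ gH].
  rewrite leqNgt; apply/negP => bg; move/negP: nU; apply; apply/bigcupP; exists g => //.
  by rewrite inE fr bg.
apply: leq_trans (subset_leq_card sub).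
rewrite cardsD; apply: leq_sub2l.
apply: leq_trans (subset_leq_card (subsetIr _ _)) _.
apply: leq_trans (card_bigcup_leq _ _) _.
rewrite -hm -sum_nat_const; apply: leq_sum => g gH; exact: card_bad (hr g gH).
Qed.

End Sw.
Local Open Scope R_scope.

Lemma exp_pow_n x n : exp x ^ n = exp (INR n * x).
Proof.
induction n as [|n IH].
- by rewrite /= Rmult_0_l exp_0.
- change (exp x ^ S n) with (exp x * exp x ^ n).
  rewrite IH -exp_plus S_INR. f_equal. ring.
Qed.

Lemma kk_fact k : INR k ^ k <= exp (INR k) * INR (fact k).
Proof.
induction k as [|k IH].
- simpl. rewrite exp_0. lra.
- destruct k as [|k].
  + simpl. generalize (exp_ineq1_le 1). lra.
  + set (K := INR (S k)) in *.
    assert (HK : 1 <= K) by (unfold K; rewrite S_INR; generalize (pos_INR k); lra).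
    assert (e1 : INR (S (S k)) = K + 1) by (unfold K; rewrite (S_INR (S k)); reflexivity).
    assert (Hp : (K + 1) ^ (S k) <= exp 1 * K ^ (S k)).
    { replace (K + 1) with (K * (1 + / K)) by (field; lra).
      rewrite Rpow_mult_distr. rewrite Rmult_comm.
      apply Rmult_le_compat_r. apply pow_le; lra.
      replace (exp 1) with (exp (/ K) ^ (S k)).
      - apply pow_incr. split. assert (0 < / K) by (apply Rinv_0_lt_compat; lra). lra.
        apply exp_ineq1_le.
      - rewrite exp_pow_n. fold K. f_equal. field. lra. }
    rewrite e1. change (fact (S (S k))) with ((S (S k)) * fact (S k))%nat.
    rewrite mult_INR e1. simpl ((K+1) ^ S (S k)).
    replace (exp (K + 1)) with (exp 1 * exp K) by (rewrite -exp_plus; f_equal; ring).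
    assert (0 <= (K + 1)) by lra.
    assert (H2 : (K + 1) * (K + 1) ^ S k <= (K + 1) * (exp 1 * K ^ S k))
      by (apply Rmult_le_compat_l; lra).
    assert (H3 : (K + 1) * (exp 1 * K ^ S k) <= (K + 1) * (exp 1 * (exp K * INR (fact (S k))))).
    { apply Rmult_le_compat_l; [lra|]. apply Rmult_le_compat_l; [generalize (exp_pos 1); lra|exact IH]. }
    change ((K + 1) ^ k.+1) with ((K + 1) * (K + 1) ^ k) in H2. lra.
Qed.

Lemma pow_fact_le lam k : 0 <= lam -> (0 < k)%coq_nat ->
  lam ^ k / INR (fact k) <= (exp 1 * lam / INR k) ^ k.
Proof.
intros Hl Hk.
assert (HK : 0 < INR k) by (apply lt_0_INR; exact Hk).
assert (HF : 0 < INR (fact k)) by apply INR_fact_lt_0.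
unfold Rdiv. rewrite !Rpow_mult_distr. rewrite pow_inv.
assert (Hkk := kk_fact k).
assert (Hp : 0 < INR k ^ k) by (apply pow_lt; lra).
rewrite (_ : exp (INR k) = exp 1 ^ k) in Hkk; last by rewrite exp_pow_n Rmult_1_r.
apply Rmult_le_reg_r with (INR k ^ k * INR (fact k)). nra.
replace (lam ^ k * / INR (fact k) * (INR k ^ k * INR (fact k))) with (lam ^ k * INR k ^ k) by (field; lra).
replace (exp 1 ^ k * lam ^ k * / INR k ^ k * (INR k ^ k * INR (fact k))) with (lam ^ k * (exp 1 ^ k * INR (fact k))) by (field; lra).
apply Rmult_le_compat_l. apply pow_le; lra. exact Hkk.
Qed.
Lemma exp_le_275 : exp 1 <= 11/4.
Proof.
  assert (exp_1 : exp 1 <> 0) by (generalize (exp_pos 1); lra).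
  assert (Hm : exp (-1) * exp 1 = 1) by (rewrite <- exp_plus; replace (-1+1) with 0 by ring; apply exp_0).
  assert (H4 : 4/11 <= exp (-1)).
  { unfold exp; case (exist_exp (-1)) as (x,e); simpl in |- *;
      unfold exp_in in e;
      assert (H := alternated_series_ineq (fun i:nat => / INR (fact i)) x 2).
  cut
    (sum_f_R0 (tg_alt (fun i:nat => / INR (fact i))) (S (2 * 2)) <= x <=
      sum_f_R0 (tg_alt (fun i:nat => / INR (fact i))) (2 * 2)).
  { intro; elim H0; clear H0; intros H0 _; simpl in H0; unfold tg_alt in H0;
      simpl in H0. eapply Rle_trans; [|apply H0]. lra. }
  apply H.
  - unfold Un_decreasing; intros;
      apply Rmult_le_reg_l with (INR (fact n)).
    { apply INR_fact_lt_0. }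
    apply Rmult_le_reg_l with (INR (fact (S n))).
    { apply INR_fact_lt_0. }
    rewrite Rinv_r.
    2:{ apply INR_fact_neq_0. }
    rewrite Rmult_1_r; rewrite Rmult_comm; rewrite Rmult_assoc;
      rewrite Rinv_l.
    2:{ apply INR_fact_neq_0. }
    rewrite Rmult_1_r; apply le_INR; apply fact_le; apply Nat.le_succ_diag_r.
  - assert (H0 := cv_speed_pow_fact 1); unfold Un_cv; unfold Un_cv in H0;
      intros; elim (H0 _ H1); intros; exists x0; intros;
      unfold Rdist in H2; unfold Rdist;
      replace (/ INR (fact n)) with (1 ^ n / INR (fact n));auto.
    unfold Rdiv; rewrite pow1; rewrite Rmult_1_l; reflexivity.
  - unfold infinite_sum in e; unfold Un_cv, tg_alt; intros; elim (e _ H0);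
      intros; exists x0; intros;
      replace (sum_f_R0 (fun i:nat => (-1) ^ i * / INR (fact i)) n) with
      (sum_f_R0 (fun i:nat => / INR (fact i) * (-1) ^ i) n);auto.
    apply sum_eq; intros; apply Rmult_comm. }
  generalize (exp_pos 1); nra.
Qed.

Lemma exp4 : exp 4 <= 3 * (216/11).
Proof.
have h := exp_le_275.
have -> : exp 4 = exp 1 ^ 4 by rewrite exp_pow_n; f_equal; simpl; ring.
have h0 : 0 <= exp 1 by generalize (exp_pos 1); lra.
have : exp 1 ^ 4 <= (11/4) ^ 4 by apply pow_incr; lra.
lra.
Qed.

Lemma final_exp y R k : 100 <= y -> 3 <= R -> ln y <= INR k ->
  y ^ 4 * (R / 3) ^ 2 <= (216 / 11 * R) ^ k.
Proof.
move=> hy hR hk.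
have qR : 0 < 216 / 11 * R by lra.
have -> : (216 / 11 * R) ^ k = exp (INR k * ln (216 / 11 * R)).
  by rewrite -exp_pow_n exp_ln.
have ln_le : forall a b, 0 < a -> a <= b -> ln a <= ln b.
  move=> a b ha /Rle_lt_or_eq_dec [hab|->]; [apply: Rlt_le; exact: ln_increasing|lra].
have e2 : exp 2 <= 100.
  have -> : exp 2 = exp 1 ^ 2 by rewrite exp_pow_n; f_equal; simpl; ring.
  have := exp_le_275; have := exp_pos 1; nra.
have ly : 2 <= ln y.
  rewrite -(ln_exp 2); apply: ln_le; [apply: exp_pos|lra].
have l4 : 4 <= ln (3 * (216 / 11)).
  rewrite -(ln_exp 4); apply: ln_le; [apply: exp_pos|exact: exp4].
have lR : 0 <= ln (R / 3).
  rewrite -ln_1; apply: ln_le; lra.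
have split : ln (216 / 11 * R) = ln (3 * (216 / 11)) + ln (R / 3).
  rewrite -ln_mult; [f_equal; field|lra|lra].
have -> : y ^ 4 * (R / 3) ^ 2 = exp (4 * ln y + 2 * ln (R / 3)).
  rewrite exp_plus (_ : 4 * ln y = INR 4 * ln y); last by rewrite /=; ring.
  rewrite (_ : 2 * ln (R / 3) = INR 2 * ln (R / 3)); last by rewrite /=; ring.
  rewrite -(exp_pow_n (ln y) 4) -(exp_pow_n (ln (R/3)) 2) !exp_ln //; lra.
have exp_le : forall a b, a <= b -> exp a <= exp b.
  move=> a b /Rle_lt_or_eq_dec [/exp_increasing|->]; lra.
apply: exp_le.
rewrite split.
have h1 : ln y * (ln (3 * (216 / 11)) + ln (R / 3)) <= INR k * (ln (3 * (216 / 11)) + ln (R / 3)).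
  apply: Rmult_le_compat_r; lra.
nra.
Qed.

Set Implicit Arguments. Unset Strict Implicit. Unset Printing Implicit Defensive.
Local Open Scope R_scope.

Lemma Bj0 n r m (v : 'I_n) : Bj r m v 0 = Lset n r m.
Proof. by apply/setP => H; rewrite inE andbT. Qed.

Lemma Bj_bound n r m (v : 'I_n) (r2 : (1 < r)%nat) G k : (0 < G)%nat ->
  (forall H e, H \in Lset n r m -> e \in H -> (G <= #|valid r v H e|)%nat) ->
  INR #|Bj r m v k| <= (INR m * INR (Nin r v) / INR G) ^ k / INR (fact k) * INR #|Lset n r m|.
Proof.
move=> G0 hG.
have HG : 0 < INR G by apply: lt_0_INR; apply/ltP.
elim: k => [|k IH].
  by rewrite Bj0 /= Rdiv_1_r !Rmult_1_l; apply: Rle_refl.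
have sw := switch r2 (j := k.+1) (ltn0Sn k) hG.
move/leP/le_INR: sw => sw; rewrite !mult_INR in sw.
set lam := INR m * INR (Nin r v) / INR G in IH *.
have Hk : 0 < INR k.+1 by apply: lt_0_INR; lia.
have Hf : 0 < INR (fact k) by apply: INR_fact_lt_0.
have hl : 0 <= lam.
  rewrite /lam; apply: Rmult_le_pos; [apply: Rmult_le_pos; apply: pos_INR|].
  by apply: Rlt_le; apply: Rinv_0_lt_compat.
have step : INR #|Bj r m v k.+1| <= INR #|Bj r m v k| * lam / INR k.+1.
  rewrite /lam; apply: (Rmult_le_reg_r (INR k.+1 * INR G)); first by apply: Rmult_lt_0_compat.
  have -> : INR #|Bj r m v k| * (INR m * INR (Nin r v) / INR G) / INR k.+1 * (INR k.+1 * INR G)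
     = INR #|Bj r m v k| * INR m * INR (Nin r v) by field; lra.
  by rewrite -Rmult_assoc.
apply: (Rle_trans _ _ _ step).
rewrite (_ : INR (fact k.+1) = INR k.+1 * INR (fact k)); last by rewrite -mult_INR.
change (lam ^ k.+1) with (lam * lam ^ k).
have hL := pos_INR #|Lset n r m|.
have : INR #|Bj r m v k| * lam <= lam ^ k / INR (fact k) * INR #|Lset n r m| * lam.
  by apply: Rmult_le_compat_r.
move=> h.
apply: (Rmult_le_reg_r (INR k.+1)) => //.
have -> : INR #|Bj r m v k| * lam / INR k.+1 * INR k.+1 = INR #|Bj r m v k| * lam by field; lra.
have -> : lam * lam ^ k / (INR k.+1 * INR (fact k)) * INR #|Lset n r m| * INR k.+1 = lam ^ k / INR (fact k) * INR #|Lset n r m| * lam by field; lra.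
exact: h.
Qed.

Lemma natR_sub a b : (b <= a)%nat -> INR (a - b) = INR a - INR b.
Proof. by move=> h; rewrite -minusE minus_INR //; apply/leP. Qed.

Lemma natR_mul a b : INR (a * b) = INR a * INR b.
Proof. by rewrite -multE mult_INR. Qed.

Lemma Nin_eq n r (v : 'I_n) : (0 < n)%nat -> (0 < r)%nat -> Nin r v = 'C(n.-1, r.-1).
Proof.
move=> n0 r0; have := Nout_in r v; rewrite Nout_eq.
case: n n0 v => // n' _ v; case: r r0 => // r' _ /=.
rewrite binS => /eqP; rewrite eqn_add2l => /eqP //.
Qed.

Lemma binrel1 n r : (0 < r)%nat -> (r <= n)%nat ->
  (r * 'C(n.-1, r) = (n - r) * 'C(n.-1, r.-1))%nat.
Proof.
case: r => // r' _; case: n => // n' h /=.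
by rewrite mul_bin_left subSS.
Qed.

Lemma binrel2 n r : (1 < r)%nat -> (r <= n)%nat ->
  ((n.-1) * (n - r) * 'C(n - 2, r - 2) = (r.-1) * r * 'C(n.-1, r))%nat.
Proof.
case: r => // [] [] // r'' _; case: n => // [] [] // n'' h.
rewrite !subSS subn0 /=.
have e1 := mul_bin_diag n''.+1 r''.+1.
have e2 := mul_bin_left n'' r''.
rewrite /= in e1.
by rewrite subn0 -mulnA -e2 mulnCA e1 mulnA.
Qed.

Lemma bin2R r : (2 * 'C(r, 2) = r * r.-1)%nat.
Proof.
case: r => // r'; have := mul_bin_left r'.+1 1; rewrite bin1 subn1 /= => ->.
by rewrite mulnC.
Qed.
From mathcomp Require Import zify.
Set Implicit Arguments. Unset Strict Implicit. Unset Printing Implicit Defensive.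
Local Open Scope R_scope.

Lemma per_vertex n r m (v : 'I_n) k :
  (1 <= n)%coq_nat -> (3 <= r)%coq_nat -> INR n / INR r ^ 2 <= INR m ->
  INR m * INR r ^ 3 / sqrt (INR n) ^ 3 < 1/10 ->
  81 * INR r ^ 2 * INR m / INR n <= INR k -> ln (INR n / INR r ^ 2) <= INR k ->
  INR #|Bj r m v k| <= 9 * (INR r ^ 6 / INR n ^ 4) * INR #|Lset n r m|.
Proof.
move=> hn1 hr3 hlow hup hk1 hk2.
set Rn := INR n in hlow hup hk1 hk2 *; set R := INR r in hlow hup hk1 hk2 *;
set M := INR m in hlow hup hk1 hk2 *; set K := INR k in hk1 hk2 *.
have hn : 1 <= Rn by have := le_INR _ _ hn1; rewrite /Rn /=.
have hR : 3 <= R by have := le_INR _ _ hr3; rewrite /R (_ : INR 3 = 3) //= ; ring.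
set s := sqrt Rn in hup.
have hs : 0 < s by apply: sqrt_lt_R0; lra.
have hs2 : s * s = Rn by apply: sqrt_sqrt; lra.
have hR2 : 0 < R ^ 2 by nra.
have hlow' : Rn <= M * R ^ 2.
  by have := Rmult_le_compat_r (R ^ 2) _ _ (Rlt_le _ _ hR2) hlow; rewrite /Rdiv Rmult_assoc Rinv_l ?Rmult_1_r; lra.
have hs3 : 0 < s ^ 3 by apply: pow_lt.
have hup' : M * R ^ 3 < s ^ 3 / 10.
  have := Rmult_lt_compat_r (s ^ 3) _ _ hs3 hup.
  by rewrite /Rdiv Rmult_assoc Rinv_l ?Rmult_1_r; lra.
have hM : 0 <= M by apply: pos_INR.
have hRs : R < s / 10.
  have h1 : s * s * R <= M * R ^ 3 by rewrite hs2; have := Rmult_le_compat_r R _ _ (ltac:(lra) : 0 <= R) hlow'; lra.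
  have h2 : s * s * R < s * s * (s / 10) by simpl in hup'; nra.
  nra.
have hR2n : R ^ 2 < Rn / 100.
  have := Rmult_le_0_lt_compat R (s / 10) R (s / 10) ltac:(lra) ltac:(lra) hRs hRs.
  rewrite (_ : s / 10 * (s / 10) = s * s / 100); last by field.
  by rewrite hs2 /= Rmult_1_r.
have hMR4 : M * R ^ 4 < Rn ^ 2 / 100.
  have : M * R ^ 3 * R < s ^ 3 / 10 * (s / 10) by apply: Rmult_le_0_lt_compat; nra.
  by simpl; nra.
have hRn : R < Rn / 100 by simpl in hR2n; nra.
have rn : (r < n)%nat by apply/ltP; apply: INR_lt; rewrite -/R -/Rn; lra.
have r2 : (1 < r)%nat by apply/ltP; lia.
have n1R : INR n.-1 = Rn - 1 by rewrite -subn1 natR_sub; [by rewrite /Rn /=|apply/leP].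
have nrR : INR (n - r) = Rn - R by rewrite natR_sub // ltnW.
have r1R : INR r.-1 = R - 1 by rewrite -subn1 natR_sub; [by rewrite /R /=|apply/leP; lia].
set N0 := 'C(n.-1, r).
have N0pos : 0 < INR N0 by apply: lt_0_INR; apply/ltP; rewrite bin_gt0 -ltnS prednK //; lia.
have c2R : 2 * INR 'C(r, 2) = R * (R - 1).
  by rewrite -r1R (_ : 2 = INR 2) // -natR_mul bin2R natR_mul.
have rel2 : (Rn - 1) * (Rn - R) * INR 'C(n - 2, r - 2) = (R - 1) * R * INR N0.
  by rewrite -n1R -nrR -r1R -!natR_mul binrel2 // ltnW.
have rel1 : R * INR N0 = (Rn - R) * INR (Nin r v).
  rewrite Nin_eq; [|lia|lia]; rewrite -nrR -!natR_mul binrel1 //; [lia|exact: ltnW].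
set X := M * (INR 'C(r, 2) * INR 'C(n - 2, r - 2)).
have hN2 : 0 <= INR 'C(n - 2, r - 2) by apply: pos_INR.
have hc2 : 0 <= INR 'C(r, 2) by apply: pos_INR.
have hden : Rn ^ 2 / 2 <= (Rn - 1) * (Rn - R) by simpl; nra.
have hX : X <= INR N0 / 100.
  have e1 : X * ((Rn - 1) * (Rn - R)) = M * INR 'C(r, 2) * ((R - 1) * R * INR N0).
    by rewrite -rel2 /X; ring.
  have e2 : M * INR 'C(r, 2) * ((R - 1) * R * INR N0) <= M * R ^ 4 * INR N0 / 2.
    have : INR 'C(r, 2) * ((R - 1) * R) <= R ^ 4 / 2 by simpl; nra.
    move=> h; have := Rmult_le_compat_l M _ _ hM h; have := Rmult_le_compat_r (INR N0) _ _ (Rlt_le _ _ N0pos) (Rmult_le_compat_l M _ _ hM h).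
    move=> h3 _; lra.
  have hX0 : 0 <= X by rewrite /X; apply: Rmult_le_pos => //; apply: Rmult_le_pos.
  have e3 : X * (Rn ^ 2 / 2) <= X * ((Rn - 1) * (Rn - R)) by apply: Rmult_le_compat_l.
  have e4 : M * R ^ 4 * INR N0 / 2 <= Rn ^ 2 / 100 * INR N0 / 2.
    have := Rmult_le_compat_r (INR N0) _ _ (Rlt_le _ _ N0pos) (Rlt_le _ _ hMR4); lra.
  have hRn2 : 0 < Rn ^ 2 by nra.
  apply: (Rmult_le_reg_r (Rn ^ 2 / 2)); first lra.
  lra.
set G := (Nout r v - m * ('C(r, 2) * 'C(n - 2, r - 2)))%nat.
have XR : INR (m * ('C(r, 2) * 'C(n - 2, r - 2))) = X by rewrite !natR_mul.
have Xle : (m * ('C(r, 2) * 'C(n - 2, r - 2)) <= Nout r v)%nat.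
  by apply/leP; apply: INR_le; rewrite XR Nout_eq -/N0; lra.
have GR : INR G = INR N0 - X by rewrite /G natR_sub // XR Nout_eq.
have Gpos : 0 < INR G by rewrite GR; lra.
have G0 : (0 < G)%nat by apply/ltP; apply: INR_lt; rewrite /=; lra.
have hG : forall H e, H \in Lset n r m -> e \in H -> (G <= #|valid r v H e|)%nat.
  by move=> H e HL _; apply: valid_lb.
have hB := Bj_bound r2 k G0 hG.
set lam := INR m * INR (Nin r v) / INR G in hB.
have hNin : 0 <= INR (Nin r v) by apply: pos_INR.
have hlam0 : 0 <= lam by rewrite /lam; apply: Rmult_le_pos; [apply: Rmult_le_pos|apply: Rlt_le; apply: Rinv_0_lt_compat].
have hlam : lam <= 3 / 2 * M * R / Rn.
  rewrite /lam -/M.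
  have hRnR : 0 < Rn - R by lra.
  have eNin : INR (Nin r v) = R * INR N0 / (Rn - R) by rewrite rel1; field; lra.
  rewrite eNin.
  apply: (Rmult_le_reg_r (INR G * (Rn - R) * Rn)); first by apply: Rmult_lt_0_compat; [apply: Rmult_lt_0_compat|lra].
  have -> : M * (R * INR N0 / (Rn - R)) / INR G * (INR G * (Rn - R) * Rn) = M * R * INR N0 * Rn by field; lra.
  have -> : 3 / 2 * M * R / Rn * (INR G * (Rn - R) * Rn) = M * R * (3 / 2 * INR G * (Rn - R)) by field; lra.
  have hMR : 0 <= M * R by nra.
  rewrite Rmult_assoc; apply: Rmult_le_compat_l => //.
  rewrite GR.
  have h1 : INR N0 * (Rn - R) * (99/100) <= (INR N0 - X) * (Rn - R).
    have h0 : 0 <= (INR N0 - X - INR N0 * (99/100)) * (Rn - R) by apply: Rmult_le_pos; lra.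
    nra.
  have h2 : INR N0 * Rn * (99 / 100) <= INR N0 * (Rn - R) by nra.
  nra.
have hk0 : 0 < K.
  apply: Rlt_le_trans hk1; apply: Rmult_lt_0_compat; last by apply: Rinv_0_lt_compat; lra.
  apply: Rmult_lt_0_compat; [lra|].
  apply: Rlt_le_trans hlow; apply: Rmult_lt_0_compat; [lra|apply: Rinv_0_lt_compat; lra].
have kpos : (0 < k)%coq_nat by apply: INR_lt; rewrite /= -/K.
have hB2 := pow_fact_le hlam0 kpos.
have hrho : exp 1 * lam / INR k <= 11 / 216 / R.
  rewrite -/K.
  have he := exp_le_275; have he0 := exp_pos 1.
  apply: (Rmult_le_reg_r K) => //.
  have -> : exp 1 * lam / K * K = exp 1 * lam by field; lra.
  apply: Rle_trans (_ : 11 / 4 * (3 / 2 * M * R / Rn) <= _).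
    apply: Rmult_le_compat => //; lra.
  apply: Rle_trans (_ : 11 / 216 / R * (81 * R ^ 2 * M / Rn) <= _); last first.
    apply: Rmult_le_compat_l => //; apply: Rlt_le; apply: Rmult_lt_0_compat; [lra|apply: Rinv_0_lt_compat; lra].
  right; field; lra.
have hrho0 : 0 <= exp 1 * lam / INR k.
  apply: Rmult_le_pos; [apply: Rmult_le_pos => //; apply: Rlt_le; apply: exp_pos|].
  by apply: Rlt_le; apply: Rinv_0_lt_compat; rewrite -/K.
have hpow : (exp 1 * lam / INR k) ^ k <= (11 / 216 / R) ^ k by apply: pow_incr.
have hy : 100 <= Rn / R ^ 2.
  apply: (Rmult_le_reg_r (R ^ 2)) => //.
  have -> : Rn / R ^ 2 * R ^ 2 = Rn by field; lra.
  lra.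
have hfin := final_exp hy hR hk2.
have hq : (11 / 216 / R) ^ k = / (216 / 11 * R) ^ k.
  by rewrite -pow_inv; f_equal; field; lra.
have hL := pos_INR #|Lset n r m|.
apply: Rle_trans hB _.
apply: Rmult_le_compat_r => //.
apply: Rle_trans hB2 _.
apply: Rle_trans hpow _.
rewrite hq.
have hpos : 0 < (Rn / R ^ 2) ^ 4 * (R / 3) ^ 2.
  apply: Rmult_lt_0_compat; apply: pow_lt; [|lra].
  apply: Rmult_lt_0_compat; [lra|apply: Rinv_0_lt_compat; lra].
apply: Rle_trans (Rinv_le_contravar _ _ hpos hfin) _.
right; field; lra.
Qed.

Lemma ratio_big n r m :
  (1 <= n)%coq_nat -> (3 <= r)%coq_nat -> INR n / INR r ^ 2 <= INR m ->
  INR m * INR r ^ 3 / sqrt (INR n) ^ 3 < 1/10 -> 1 <= INR n / INR r ^ 2.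
Proof.
move=> hn1 hr3 hlow hup.
set Rn := INR n in hlow hup *; set R := INR r in hlow hup *; set M := INR m in hlow hup *.
have hn : 1 <= Rn by have := le_INR _ _ hn1; rewrite /Rn /=.
have hR : 3 <= R by have := le_INR _ _ hr3; rewrite /R (_ : INR 3 = 3) //= ; ring.
set s := sqrt Rn in hup.
have hs : 0 < s by apply: sqrt_lt_R0; lra.
have hs2 : s * s = Rn by apply: sqrt_sqrt; lra.
have hR2 : 0 < R ^ 2 by nra.
have hlow' : Rn <= M * R ^ 2.
  by have := Rmult_le_compat_r (R ^ 2) _ _ (Rlt_le _ _ hR2) hlow; rewrite /Rdiv Rmult_assoc Rinv_l ?Rmult_1_r; lra.
have hs3 : 0 < s ^ 3 by apply: pow_lt.
have hup' : M * R ^ 3 < s ^ 3 / 10.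
  have := Rmult_lt_compat_r (s ^ 3) _ _ hs3 hup.
  by rewrite /Rdiv Rmult_assoc Rinv_l ?Rmult_1_r; lra.
have hM : 0 <= M by apply: pos_INR.
have hRs : R < s / 10.
  have h1 : s * s * R <= M * R ^ 3 by rewrite hs2; have := Rmult_le_compat_r R _ _ (ltac:(lra) : 0 <= R) hlow'; lra.
  have h2 : s * s * R < s * s * (s / 10) by simpl in hup'; nra.
  nra.
have hR2n : R ^ 2 < Rn / 100.
  have := Rmult_le_0_lt_compat R (s / 10) R (s / 10) ltac:(lra) ltac:(lra) hRs hRs.
  rewrite (_ : s / 10 * (s / 10) = s * s / 100); last by field.
  by rewrite hs2 /= Rmult_1_r.
apply: (Rmult_le_reg_r (R ^ 2)) => //.
have -> : Rn / R ^ 2 * R ^ 2 = Rn by field; lra.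
lra.
Qed.

Lemma INR_sub_le a b : INR a - INR b <= INR (a - b).
Proof.
case: (leqP b a) => h; first by rewrite natR_sub //; apply: Rle_refl.
have -> : (a - b = 0)%nat by apply/eqP; rewrite subn_eq0 ltnW.
rewrite /=; have := pos_INR b; have := lt_INR _ _ (ltP h); have := pos_INR a; lra.
Qed.

Lemma sum_INR_le (I : finType) (A : {pred I}) (f : I -> nat) c :
  (forall i, INR (f i) <= c) -> INR (\sum_(i in A) f i) <= INR #|A| * c.
Proof.
move=> hf; rewrite -sum1_card.
elim/big_rec2: _ => [|i s t _ IH]; first by rewrite /= Rmult_0_l; apply: Rle_refl.
rewrite -plusE !plus_INR Rmult_plus_distr_r /= Rmult_1_l.
by apply: Rplus_le_compat.
Qed.

Lemma sum_INR_le_full (I : finType) (f : I -> nat) c :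
  (forall i, INR (f i) <= c) -> INR (\sum_i f i) <= INR #|I| * c.
Proof.
move=> hf; have -> : #|I| = (\sum_(i : I) 1)%nat by rewrite sum1_card.
elim/big_rec2: _ => [|i s t _ IH]; first by rewrite /= Rmult_0_l; apply: Rle_refl.
rewrite -plusE !plus_INR Rmult_plus_distr_r /= Rmult_1_l.
by apply: Rplus_le_compat.
Qed.

Lemma Rceil_ge x : x <= IZR (Rceil x).
Proof.
rewrite /Rceil; have [h1 h2] := archimed (- x).
rewrite opp_IZR minus_IZR /=; lra.
Qed.

Theorem theorem4p1 (r m : nat -> nat)
  (hr : forall n, (3 <= r n)%coq_nat)
  (hlow : forall n, (INR n / (INR (r n) ^ 2) <= INR (m n))%R)
  (hup : Un_cv (fun n => (INR (m n) * INR (r n) ^ 3 / (sqrt (INR n) ^ 3))%R) 0%R) :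
  exists (C : R) (N : nat), forall n, (N <= n)%coq_nat ->
    (INR #|Lr n (r n) (m n)| - INR #|Lr_good n (r n) (m n)|
       <= C * (INR (r n) ^ 6 / INR n ^ 3) * INR #|Lr n (r n) (m n)|)%R.
Proof.
have [N hN] := hup (1/10) ltac:(lra).
exists 9, (maxn N 1) => n hn.
have hnN : (n >= N)%coq_nat by move/leP: hn; rewrite geq_max => /andP [/leP h _].
have hn1 : (1 <= n)%coq_nat by move/leP: hn; rewrite geq_max => /andP [_ /leP h].
have hu := hN n hnN; rewrite /Rdist Rminus_0_r in hu.
have hu' : INR (m n) * INR (r n) ^ 3 / sqrt (INR n) ^ 3 < 1/10.
  by move: hu; have := Rle_abs (INR (m n) * INR (r n) ^ 3 / sqrt (INR n) ^ 3); lra.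
have hy := ratio_big hn1 (hr n) (hlow n) hu'.
set Rn := INR n in hy *; set R := INR (r n) in hy *; set M := INR (m n) in hy *.
have hnR : 1 <= Rn by have := le_INR _ _ hn1; rewrite /Rn /=.
have hR : 3 <= R by have := le_INR _ _ (hr n); rewrite /R (_ : INR 3 = 3) //= ; ring.
have hlny : 0 <= ln (Rn / R ^ 2).
  case: (Rle_lt_or_eq_dec _ _ hy) => h; last by rewrite -h ln_1; apply: Rle_refl.
  rewrite -ln_1; apply: Rlt_le; apply: ln_increasing => //; lra.
have hM : 0 <= M by apply: pos_INR.
have h81 : 0 <= 81 * R ^ 2 * M / Rn.
  apply: Rmult_le_pos; [apply: Rmult_le_pos; [nra|lra]|apply: Rlt_le; apply: Rinv_0_lt_compat; lra].
set M0 := M0star n (r n) (m n).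
have hM0 : ln (Rn / R ^ 2) + 81 * R ^ 2 * M / Rn <= IZR M0.
  rewrite /M0 /M0star (_ : 3 ^ 4 = 81); last by simpl; ring.
  exact: Rceil_ge.
have hM0pos : (0 <= M0)%Z by apply: le_IZR; lra.
set k := (Z.to_nat M0).+1.
have hk : INR k = IZR M0 + 1.
  by rewrite /k S_INR INR_IZR_INZ Z2Nat.id.
have hk1 : 81 * R ^ 2 * M / Rn <= INR k by rewrite hk; lra.
have hk2 : ln (Rn / R ^ 2) <= INR k by rewrite hk; lra.
have pv := fun v => per_vertex v hn1 (hr n) (hlow n) hu' hk1 hk2.
have sub : Lr n (r n) (m n) :\: Lr_good n (r n) (m n) \subset
    \bigcup_(v : 'I_n) Bj (r n) (m n) v k.
  apply/subsetP => H; rewrite !inE => /andP [ng HL].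
  rewrite HL /= in ng; move/forallPn: ng => [v hv].
  apply/bigcupP; exists v => //; rewrite inE; apply/andP; split; first by rewrite /Lset inE.
  case E: (Z.of_nat (deg H v) <=? M0star n (r n) (m n))%Z hv => // _.
  have h := proj1 (Z.leb_gt _ _) E.
  rewrite /k; apply/ltP; rewrite -/M0 in h; lia.
have cnat : (#|Lr n (r n) (m n)| - #|Lr_good n (r n) (m n)| <=
    \sum_(v : 'I_n) #|Bj (r n) (m n) v k|)%nat.
  apply: leq_trans _ (card_bigcup_leq _ _).
  apply: leq_trans _ (subset_leq_card sub).
  rewrite cardsD leq_sub2l //; exact: subset_leq_card (subsetIr _ _).
apply: Rle_trans (INR_sub_le _ _) _.
apply: Rle_trans (le_INR _ _ (leP cnat)) _.
apply: Rle_trans (sum_INR_le_full pv) _.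
rewrite card_ord -/Rn -/R /Lset.
right; field; lra.
Qed.
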